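(* If $\Gamma$ is well-formed and $\Gamma \vdash t:A$ is derivable in $\mathcal{T}'$, then $\Gamma \vdash t:A$ is derivable in $\mathcal{T}$.
   Context: Fix a (functional) Pure type system: a set $\mathcal{S}$ of sorts, for each sort $s$ an infinite set $\mathcal{V}_s$ of variables (pairwise disjoint), a functional relation $\mathcal{A}\subseteq \mathcal{S}\times\mathcal{S}$ (axioms) and a functional relation $\mathcal{R}\subseteq\mathcal{S}\times\mathcal{S}\times\mathcal{S}$ (rules). Terms are $t ::= x \mid s \mid (x:A)\rightarrow B \mid \lambda x:A\,t \mid t\,u$, and $\equiv$ denotes ($\beta$-)conversion. A context is a finite sequence $x_1:A_1,\dots,x_n:A_n$ with pairwise distinct variables. The usual system $\mathcal{T}$ has the rules: (sort) $\vdash s_1:s_2$ for $\langle s_1,s_2\rangle\in\mathcal{A}$ (empty context); (start) from $\Gamma\vdash A:s$ infer $\Gamma,x:A\vdash x:A$ for $x\in\mathcal{V}_s$; (weak) from $\Gamma\vdash t:A$ and $\Gamma\vdash B:s$ infer $\Gamma,x:B\vdash t:A$ for $x\in\mathcal{V}_s$; (prod) from $\Gamma\vdash A:s_1$ and $\Gamma,x:A\vdash B:s_2$ infer $\Gamma\vdash (x:A)\rightarrow B:s_3$ for $\langle s_1,s_2,s_3\rangle\in\mathcal{R}$; (abs) from $\Gamma\vdash A:s_1$, $\Gamma,x:A\vdash B:s_2$ and $\Gamma,x:A\vdash t:B$ infer $\Gamma\vdash\lambda x:A\,t:(x:A)\rightarrow B$ for $\langle s_1,s_2,s_3\rangle\in\mathcal{R}$;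 (app) from $\Gamma\vdash t:(x:A)\rightarrow B$ and $\Gamma\vdash u:A$ infer $\Gamma\vdash t\,u:(u/x)B$; (conv) from $\Gamma\vdash t:A$ and $\Gamma\vdash B:s$ infer $\Gamma\vdash t:B$ when $A\equiv B$. The system $\mathcal{T}'$ has the rules (prod), (abs), (app), (conv) as in $\mathcal{T}$ together with: (sort') $\Gamma\vdash s_1:s_2$ for any context $\Gamma$ and $\langle s_1,s_2\rangle\in\mathcal{A}$; (var') from $\Gamma,x:A,\Gamma'\vdash A:s$ infer $\Gamma,x:A,\Gamma'\vdash x:A$ for $x\in\mathcal{V}_s$; there is no weakening rule. Well-formed contexts are defined inductively: the empty context is well-formed, and if $\Gamma$ is well-formed and $\Gamma\vdash A:s$ is derivable in $\mathcal{T}$ for some sort $s$, then $\Gamma,x:A$ is well-formed.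
   Formalization: In the definition of well-formed contexts, Γ,x:A is well-formed only when x ∈ $\mathcal{V}_s$ for the sort s with Γ ⊢ A:s derivable in $\mathcal{T}$, rather than for any variable x. The statement above fails without it. *)

(* Defs.v *)
(* Pure type systems in locally nameless representation:
   free variables are named (elements of [var]), bound variables are
   de Bruijn indices, so terms are identified up to alpha-conversion. *)
From Stdlib Require Import List Relations.
Import ListNotations.

Section PTS.

Variables (sort var : Type).

Inductive term : Type :=
| tSort (s : sort)
| tVar (x : var)
| tBvar (n : nat)
| tPi (A B : term)             (* (x:A) -> B, B the body with x bound *)
| tLam (A t : term)
| tApp (t u : term).

Fixpoint open_rec (k : nat) (u t : term) : term :=
  match t with
  | tSort s => tSort s
  | tVar x => tVar x
  | tBvar n => if Nat.eqb n k then u else tBvar n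
  | tPi A B => tPi (open_rec k u A) (open_rec (Datatypes.S k) u B)
  | tLam A b => tLam (open_rec k u A) (open_rec (Datatypes.S k) u b)
  | tApp a b => tApp (open_rec k u a) (open_rec k u b)
  end.

(* [open B u] is the substitution (u/x)B of the named presentation,
   where x is the variable bound in (x:A)->B or \x:A. B. *)
Definition open (t u : term) : term := open_rec 0 u t.

Fixpoint fv (t : term) : list var :=
  match t with
  | tSort _ => []
  | tVar x => [x]
  | tBvar _ => []
  | tPi A B => fv A ++ fv B
  | tLam A b => fv A ++ fv b
  | tApp a b => fv a ++ fv b
  end.

Fixpoint lc_at (k : nat) (t : term) : Prop :=
  match t with
  | tSort _ => True
  | tVar _ => True
  | tBvar n => n < k
  | tPi A B => lc_at k A /\ lc_at (Datatypes.S k) B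
  | tLam A b => lc_at k A /\ lc_at (Datatypes.S k) b
  | tApp a b => lc_at k a /\ lc_at k b
  end.

Inductive beta : term -> term -> Prop :=
| beta_redex A t u :
    lc_at 0 A -> lc_at 1 t -> lc_at 0 u ->
    beta (tApp (tLam A t) u) (open t u)
| beta_app1 t t' u : beta t t' -> lc_at 0 u -> beta (tApp t u) (tApp t' u)
| beta_app2 t u u' : lc_at 0 t -> beta u u' -> beta (tApp t u) (tApp t u')
| beta_pi1 A A' B : beta A A' -> lc_at 1 B -> beta (tPi A B) (tPi A' B)
| beta_pi2 A B B' x :
    lc_at 0 A -> ~ In x (fv B) -> ~ In x (fv B') ->
    beta (open B (tVar x)) (open B' (tVar x)) -> beta (tPi A B) (tPi A B')
| beta_lam1 A A' t : beta A A' -> lc_at 1 t -> beta (tLam A t) (tLam A' t)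
| beta_lam2 A t t' x :
    lc_at 0 A -> ~ In x (fv t) -> ~ In x (fv t') ->
    beta (open t (tVar x)) (open t' (tVar x)) -> beta (tLam A t) (tLam A t').

Definition conv : term -> term -> Prop := clos_refl_sym_trans term beta.

(* contexts: the list is stored in reverse, so the context
   x1:A1,...,xn:An is [(xn,An); ...; (x1,A1)], and  Gamma, x:A  is
   (x,A) :: Gamma;  Gamma, x:A, Gamma'  is  Gamma' ++ (x,A) :: Gamma. *)
Definition ctx : Type := list (var * term).
Definition dom (G : ctx) : list var := map fst G.
Definition is_context (G : ctx) : Prop := NoDup (dom G).

Variable vsort : var -> sort.           (* x \in V_s  <->  vsort x = s *)
Variable ax : sort -> sort -> Prop.
Variable rl : sort -> sort -> sort -> Prop.

Inductive typT : ctx -> term -> term -> Prop :=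
| T_sort s1 s2 : ax s1 s2 -> typT [] (tSort s1) (tSort s2)
| T_start G A s x :
    typT G A (tSort s) -> vsort x = s -> ~ In x (dom G) ->
    typT ((x, A) :: G) (tVar x) A
| T_weak G t A B s x :
    typT G t A -> typT G B (tSort s) -> vsort x = s -> ~ In x (dom G) ->
    typT ((x, B) :: G) t A
| T_prod G A B s1 s2 s3 x :
    typT G A (tSort s1) ->
    typT ((x, A) :: G) (open B (tVar x)) (tSort s2) ->
    ~ In x (dom G) -> ~ In x (fv B) -> rl s1 s2 s3 ->
    typT G (tPi A B) (tSort s3)
| T_abs G A B t s1 s2 s3 x :
    typT G A (tSort s1) ->
    typT ((x, A) :: G) (open B (tVar x)) (tSort s2) ->
    typT ((x, A) :: G) (open t (tVar x)) (open B (tVar x)) ->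
    ~ In x (dom G) -> ~ In x (fv B) -> ~ In x (fv t) -> rl s1 s2 s3 ->
    typT G (tLam A t) (tPi A B)
| T_app G t u A B :
    typT G t (tPi A B) -> typT G u A -> typT G (tApp t u) (open B u)
| T_conv G t A B s :
    typT G t A -> typT G B (tSort s) -> conv A B -> typT G t B.

(* The system T' (no weakening, sort' and var' instead of sort/start) *)
Inductive typT' : ctx -> term -> term -> Prop :=
| T'_sort G s1 s2 : is_context G -> ax s1 s2 -> typT' G (tSort s1) (tSort s2)
| T'_var G G' x A s :
    typT' (G' ++ (x, A) :: G) A (tSort s) -> vsort x = s ->
    typT' (G' ++ (x, A) :: G) (tVar x) A
| T'_prod G A B s1 s2 s3 x :
    typT' G A (tSort s1) ->
    typT' ((x, A) :: G) (open B (tVar x)) (tSort s2) ->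
    ~ In x (dom G) -> ~ In x (fv B) -> rl s1 s2 s3 ->
    typT' G (tPi A B) (tSort s3)
| T'_abs G A B t s1 s2 s3 x :
    typT' G A (tSort s1) ->
    typT' ((x, A) :: G) (open B (tVar x)) (tSort s2) ->
    typT' ((x, A) :: G) (open t (tVar x)) (open B (tVar x)) ->
    ~ In x (dom G) -> ~ In x (fv B) -> ~ In x (fv t) -> rl s1 s2 s3 ->
    typT' G (tLam A t) (tPi A B)
| T'_app G t u A B :
    typT' G t (tPi A B) -> typT' G u A -> typT' G (tApp t u) (open B u)
| T'_conv G t A B s :
    typT' G t A -> typT' G B (tSort s) -> conv A B -> typT' G t B.

Inductive wf : ctx -> Prop :=
| wf_nil : wf []
| wf_cons G x A s :
    wf G -> typT G A (tSort s) -> vsort x = s -> ~ In x (dom G) ->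
    wf ((x, A) :: G).

End PTS.

Arguments tSort {sort var}.
Arguments tVar {sort var}.
Arguments tBvar {sort var}.
Arguments tPi {sort var}.
Arguments tLam {sort var}.
Arguments tApp {sort var}.
Arguments typT {sort var}.
Arguments typT' {sort var}.
Arguments wf {sort var}.

(* Main.v *)
Require Import Defs.
From Stdlib Require Import List Relations ClassicalEpsilon.
Import ListNotations.

Arguments open_rec {sort var}.
Arguments open {sort var}.
Arguments fv {sort var}.
Arguments lc_at {sort var}.
Arguments beta {sort var}.
Arguments conv {sort var}.
Arguments dom {sort var}.

Section Proofs.
Variables (sort var : Type) (vsort : var -> sort)
  (ax : sort -> sort -> Prop) (rl : sort -> sort -> sort -> Prop).
Variable Vinf : forall (s : sort) (l : list var), exists x, vsort x = s /\ ~ In x l.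

Notation tm := (term sort var).

Fixpoint ren (f : var -> var) (t : tm) : tm :=
  match t with
  | tSort s => tSort s
  | tVar x => tVar (f x)
  | tBvar n => tBvar n
  | tPi A B => tPi (ren f A) (ren f B)
  | tLam A b => tLam (ren f A) (ren f b)
  | tApp a b => tApp (ren f a) (ren f b)
  end.

Lemma ren_open_rec f u (t : tm) : forall k,
  ren f (open_rec k u t) = open_rec k (ren f u) (ren f t).
Proof.
  induction t; intros; simpl; try congruence.
  destruct (Nat.eqb n k); reflexivity.
Qed.

Lemma ren_ext f g (t : tm) :
  (forall w, In w (fv t) -> f w = g w) -> ren f t = ren g t.
Proof.
  induction t; intros H; simpl in *; try reflexivity;
  try (rewrite IHt1, IHt2; [reflexivity| |]; intros; apply H; apply in_or_app; auto).
  rewrite H; auto.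
Qed.

Lemma ren_id (t : tm) : ren (fun x => x) t = t.
Proof. induction t; simpl; congruence. Qed.

Lemma lc_ren f (t : tm) : forall k, lc_at k t -> lc_at k (ren f t).
Proof. induction t; simpl; intuition. Qed.

Lemma fv_open_sup (t : tm) u : forall k w, In w (fv t) -> In w (fv (open_rec k u t)).
Proof.
  induction t; simpl; intros; auto; try contradiction;
  apply in_app_or in H; apply in_or_app; destruct H; auto.
Qed.

Definition upd (f : var -> var) x y : var -> var :=
  fun z => if excluded_middle_informative (z = x) then y else f z.

Lemma upd_eq f x y : upd f x y x = y.
Proof. unfold upd; destruct excluded_middle_informative; congruence. Qed.

Lemma upd_neq f x y z : z <> x -> upd f x y z = f z.
Proof. unfold upd; destruct excluded_middle_informative; congruence. Qed.

Lemma open_ren_upd f x y (B : tm) : ~ In x (fv B) ->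
  ren (upd f x y) (open B (tVar x)) = open (ren f B) (tVar y).
Proof.
  intros H. unfold open. rewrite ren_open_rec. simpl. rewrite upd_eq.
  rewrite (ren_ext (upd f x y) f B); auto.
  intros w Hw. apply upd_neq. intro; subst; auto.
Qed.

Lemma beta_ren (a b : tm) : beta a b -> forall f, beta (ren f a) (ren f b).
Proof.
  induction 1; intros f; simpl.
  - unfold open. rewrite ren_open_rec. apply beta_redex; apply lc_ren; auto.
  - apply beta_app1; auto. apply lc_ren; auto.
  - apply beta_app2; auto. apply lc_ren; auto.
  - apply beta_pi1; auto. apply lc_ren; auto.
  - destruct (Vinf (vsort x) (fv (ren f B) ++ fv (ren f B'))) as [z [_ Hz]].
    apply beta_pi2 with z.
    + apply lc_ren; auto.
    + intro; apply Hz; apply in_or_app; auto.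
    + intro; apply Hz; apply in_or_app; auto.
    + specialize (IHbeta (upd f x z)).
      rewrite !open_ren_upd in IHbeta; auto.
  - apply beta_lam1; auto. apply lc_ren; auto.
  - destruct (Vinf (vsort x) (fv (ren f t) ++ fv (ren f t'))) as [z [_ Hz]].
    apply beta_lam2 with z.
    + apply lc_ren; auto.
    + intro; apply Hz; apply in_or_app; auto.
    + intro; apply Hz; apply in_or_app; auto.
    + specialize (IHbeta (upd f x z)).
      rewrite !open_ren_upd in IHbeta; auto.
Qed.

Lemma conv_ren (a b : tm) : conv a b -> forall f, conv (ren f a) (ren f b).
Proof.
  unfold conv. induction 1 as [x y H|x|x y H IH|x y z H1 IH1 H2 IH2]; intros f.
  - apply rst_step. apply beta_ren; auto.
  - apply rst_refl.
  - apply rst_sym; apply IH.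
  - eapply rst_trans; [apply IH1|apply IH2].
Qed.

Lemma typT'_fv G (t T : tm) : typT' vsort ax rl G t T ->
  forall w, In w (fv t) -> In w (dom G).
Proof.
  induction 1; simpl; intros w Hw; try contradiction.
  - destruct Hw as [<-|[]]. unfold dom. rewrite map_app. apply in_or_app.
    right; left; reflexivity.
  - apply in_app_or in Hw; destruct Hw as [Hw|Hw]; auto.
    assert (Hx := IHtypT'2 w (fv_open_sup _ _ _ _ Hw)).
    destruct Hx as [Hx|Hx]; simpl in Hx; auto. subst; contradiction.
  - apply in_app_or in Hw; destruct Hw as [Hw|Hw]; auto.
    assert (Hx := IHtypT'3 w (fv_open_sup _ _ _ _ Hw)).
    destruct Hx as [Hx|Hx]; simpl in Hx; auto. subst; contradiction.
  - apply in_app_or in Hw; destruct Hw as [Hw|Hw]; auto.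
  - auto.
Qed.

Lemma typT_fv G (t T : tm) : typT vsort ax rl G t T ->
  forall w, In w (fv t) -> In w (dom G).
Proof.
  induction 1; simpl; intros w Hw; try contradiction.
  - destruct Hw as [<-|[]]. left; reflexivity.
  - right; auto.
  - apply in_app_or in Hw; destruct Hw as [Hw|Hw]; auto.
    assert (Hx := IHtypT2 w (fv_open_sup _ _ _ _ Hw)).
    destruct Hx as [Hx|Hx]; simpl in Hx; auto. subst; contradiction.
  - apply in_app_or in Hw; destruct Hw as [Hw|Hw]; auto.
    assert (Hx := IHtypT3 w (fv_open_sup _ _ _ _ Hw)).
    destruct Hx as [Hx|Hx]; simpl in Hx; auto. subst; contradiction.
  - apply in_app_or in Hw; destruct Hw as [Hw|Hw]; auto.
  - auto.
Qed.

Definition ws (G : ctx sort var) : Prop :=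
  forall z B, In (z, B) G -> forall w, In w (fv B) -> In w (dom G).

Lemma ws_ext G x (A : tm) : ws G -> (forall w, In w (fv A) -> In w (dom G)) ->
  ws ((x, A) :: G).
Proof.
  intros H HA z B [E|E] w Hw.
  - inversion E; subst. right; auto.
  - right; eapply H; eauto.
Qed.

Lemma wf_ws G : wf vsort ax rl G -> ws G.
Proof.
  induction 1.
  - intros z B Hz; destruct Hz.
  - apply ws_ext; auto. eapply typT_fv; eauto.
Qed.

Lemma wf_var G : wf vsort ax rl G -> forall z B, In (z, B) G ->
  typT vsort ax rl G (tVar z) B.
Proof.
  induction 1; intros z B E; [destruct E|]. destruct E as [E|E].
  - inversion E; subst. eapply T_start; eauto.
  - eapply T_weak; eauto.
Qed.

Lemma wf_sort G s1 s2 : wf vsort ax rl G -> ax s1 s2 ->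
  typT vsort ax rl G (tSort s1) (tSort s2).
Proof.
  induction 1; intros.
  - apply T_sort; auto.
  - eapply T_weak; eauto.
Qed.

Lemma in_dom (G : ctx sort var) z B : In (z, B) G -> In z (dom G).
Proof. intros H. unfold dom. change z with (fst (z, B)). apply in_map; auto. Qed.

Lemma ext_R G (A : tm) x f D s y :
  ws G -> (forall w, In w (fv A) -> In w (dom G)) -> ~ In x (dom G) ->
  (forall z B, In (z, B) G -> typT vsort ax rl D (tVar (f z)) (ren f B)) ->
  typT vsort ax rl D (ren f A) (tSort s) -> vsort y = s -> ~ In y (dom D) ->
  forall z B, In (z, B) ((x, A) :: G) ->
  typT vsort ax rl ((y, ren f A) :: D) (tVar (upd f x y z)) (ren (upd f x y) B).
Proof.
  intros Hws HA Hx HR HAs Hy HyD z B [E|E].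
  - injection E as <- <-. rewrite upd_eq.
    rewrite (ren_ext (upd f x y) f A).
    + eapply T_start; eauto.
    + intros w Hw. apply upd_neq. intros ->. apply Hx; auto.
  - assert (z <> x) by (intro; subst; apply Hx; eapply in_dom; eauto).
    rewrite upd_neq by auto.
    rewrite (ren_ext (upd f x y) f B).
    + eapply T_weak; eauto.
    + intros w Hw. apply upd_neq. intros ->. apply Hx; eapply Hws; eauto.
Qed.

Lemma main_gen G (t T : tm) : typT' vsort ax rl G t T -> ws G ->
  forall f D, wf vsort ax rl D ->
  (forall z B, In (z, B) G -> typT vsort ax rl D (tVar (f z)) (ren f B)) ->
  typT vsort ax rl D (ren f t) (ren f T).
Proof.
  induction 1; intros Hws f D HD HR; simpl.
  - apply wf_sort; auto.
  - apply HR. apply in_or_app. right; left; reflexivity.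
  - assert (HA := IHtypT'1 Hws f D HD HR); simpl in HA.
    destruct (Vinf s1 (dom D ++ fv (ren f B))) as [y [Hy Hyn]].
    assert (HAfv := typT'_fv _ _ _ H).
    specialize (IHtypT'2 (ws_ext G x A Hws HAfv) (upd f x y) ((y, ren f A) :: D)).
    rewrite open_ren_upd in IHtypT'2 by auto. simpl in IHtypT'2.
    eapply T_prod with (x := y); eauto.
    + apply IHtypT'2.
      * eapply wf_cons; eauto. intro; apply Hyn; apply in_or_app; auto.
      * eapply ext_R; eauto. intro; apply Hyn; apply in_or_app; auto.
    + intro; apply Hyn; apply in_or_app; auto.
    + intro; apply Hyn; apply in_or_app; auto.
  - assert (HA := IHtypT'1 Hws f D HD HR); simpl in HA.
    destruct (Vinf s1 (dom D ++ fv (ren f B) ++ fv (ren f t))) as [y [Hy Hyn]].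
    assert (HAfv := typT'_fv _ _ _ H).
    assert (Hws' := ws_ext G x A Hws HAfv).
    assert (HD' : wf vsort ax rl ((y, ren f A) :: D)).
    { eapply wf_cons; eauto. intro; apply Hyn; apply in_or_app; auto. }
    assert (HR' := ext_R G A x f D s1 y Hws HAfv H2 HR HA Hy
                     ltac:(intro; apply Hyn; apply in_or_app; auto)).
    specialize (IHtypT'2 Hws' (upd f x y) _ HD' HR').
    specialize (IHtypT'3 Hws' (upd f x y) _ HD' HR').
    rewrite open_ren_upd in IHtypT'2, IHtypT'3 by auto.
    rewrite open_ren_upd in IHtypT'3 by auto. simpl in IHtypT'2.
    eapply T_abs with (x := y); eauto.
    + intro; apply Hyn; apply in_or_app; auto.
    + intro; apply Hyn; apply in_or_app; right; apply in_or_app; auto.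
    + intro; apply Hyn; apply in_or_app; right; apply in_or_app; auto.
  - unfold open. rewrite ren_open_rec. eapply T_app.
    + apply (IHtypT'1 Hws f D HD HR).
    + apply (IHtypT'2 Hws f D HD HR).
  - eapply T_conv.
    + apply (IHtypT'1 Hws f D HD HR).
    + apply (IHtypT'2 Hws f D HD HR).
    + apply conv_ren; auto.
Qed.

End Proofs.

Theorem mainTheorem5
  (sort var : Type) (vsort : var -> sort)
  (ax : sort -> sort -> Prop) (rl : sort -> sort -> sort -> Prop)
  (* each V_s is infinite *)
  (Vinf : forall (s : sort) (l : list var), exists x, vsort x = s /\ ~ In x l)
  (* functional PTS *)
  (ax_fun : forall s s1 s2, ax s s1 -> ax s s2 -> s1 = s2)
  (rl_fun : forall s1 s2 s3 s3', rl s1 s2 s3 -> rl s1 s2 s3' -> s3 = s3')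
  (G : ctx sort var) (t A : term sort var) :
  wf vsort ax rl G -> typT' vsort ax rl G t A -> typT vsort ax rl G t A.
Proof.
  intros HG H.
  pose proof (main_gen sort var vsort ax rl Vinf G t A H (wf_ws _ _ _ _ _ _ HG)
                (fun x => x) G HG) as M.
  rewrite !ren_id in M. apply M.
  intros z B Hz. rewrite ren_id. apply wf_var; auto.
Qed.
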